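(* Let $m\in[1/2,1)$ and let $g_s:\mathbb{T}\to\mathbb{T}$ be as in the context. Then for every $s\in J_\Gamma:=\left[\frac{1}{-2+1/(m-m^2)},\,\frac12\right]$, the map $g_s$ has a fixed point.
   Context: Let $\mathbb{T}=\mathbb{R}/\mathbb{Z}\cong[0,1)$, $m\in[1/2,1)$ and $\Lambda=m/(1-m)$. Define $h:\mathbb{T}\to\mathbb{T}$ by $h(y)=1-m+\Lambda y$ for $y\in[0,1-m]$ and $h(y)=\Lambda^{-1}(y-(1-m))$ for $y\in[1-m,1)$, and for $s\in\mathbb{R}$ let $g_s(x)=h(x+s \bmod 1)$. Equivalently, $g_s$ is the first-return map to the bottom side of the unit square of the upward linear flow in direction $(s,1)$ on the dilation surface obtained from the unit square by identifying its vertical sides by translation, gluing the top segment $[0,1-m]\times\{1\}$ to the bottom segment $[1-m,1]\times\{0\}$ via $(y,1)\mapsto(1-m+\Lambda y,0)$, and gluing $[1-m,1]\times\{1\}$ to $[0,1-m]\times\{0\}$ via $(y,1)\mapsto(\Lambda^{-1}(y-1+m),0)$. *)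

(* Defs.v *)
From Stdlib Require Import Reals.
Open Scope R_scope.

(* floor and fractional part: Stdlib's [up x] is the unique integer with
   x < up x <= x + 1, so floor x = up x - 1. *)
Definition floorR (x : R) : Z := (up x - 1)%Z.
Definition fracR (x : R) : R := x - IZR (floorR x).

(* The circle T = R/Z is represented by [0,1); reduction mod 1 is fracR. *)
Definition Lam (m : R) : R := m / (1 - m).

(* h : T -> T, for y in [0,1). At y = 1 - m both branches agree mod 1. *)
Definition h (m : R) (y : R) : R :=
  fracR (if Rle_dec y (1 - m) then 1 - m + Lam m * y
         else / Lam m * (y - (1 - m))).

Definition g (m s : R) (x : R) : R := h m (fracR (x + s)).

(* Main.v *)
Require Import Defs.
From Stdlib Require Import Reals Lra Psatz.
Open Scope R_scope.

Lemma frac_id (z : R) : 0 <= z < 1 -> fracR z = z.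
Proof.
  intros [H0 H1]. unfold fracR, floorR.
  assert (up z = 1%Z) as ->.
  { symmetry. apply tech_up; simpl; lra. }
  simpl. lra.
Qed.

Lemma frac_one : fracR 1 = 0.
Proof.
  unfold fracR, floorR.
  assert (up 1 = 2%Z) as ->.
  { symmetry. apply tech_up; simpl; lra. }
  simpl. lra.
Qed.

Theorem lemmaA2 (m s : R) (Hm1 : 1/2 <= m) (Hm2 : m < 1)
  (Hs1 : 1 / (-2 + 1 / (m - m^2)) <= s) (Hs2 : s <= 1/2) :
  exists x : R, 0 <= x < 1 /\ g m s x = x.
Proof.
  assert (Hp : 0 < m - m^2) by nra.
  assert (Hp2 : m - m^2 <= 1/4) by nra.
  assert (E : 1 / (-2 + 1 / (m - m^2)) = (m - m^2) / (1 - 2 * (m - m^2))).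
  { field. split; lra. }
  rewrite E in Hs1.
  assert (Hs : 1 - m <= s).
  { eapply Rle_trans; [|exact Hs1].
    assert (D : (m - m^2) / (1 - 2 * (m - m^2)) - (1 - m)
              = (1 - m) * (1 - m) * (2 * m - 1) / (1 - 2 * (m - m^2))).
    { field. lra. }
    assert (0 <= (1 - m) * (1 - m) * (2 * m - 1) / (1 - 2 * (m - m^2))).
    { unfold Rdiv. apply Rmult_le_pos; [apply Rmult_le_pos; [apply Rmult_le_pos|]; lra|]. apply Rlt_le, Rinv_0_lt_compat. lra. }
    lra. }
  destruct (Req_dec s (1 - m)) as [Heq|Hne].
  - exists 0. split; [lra|]. unfold g, h.
    rewrite (frac_id (0 + s)) by lra.
    destruct (Rle_dec (0 + s) (1 - m)) as [_|n]; [|lra].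
    replace (1 - m + Lam m * (0 + s)) with 1.
    + apply frac_one.
    + unfold Lam. rewrite Heq. field. lra.
  - assert (Hgt : 1 - m < s) by lra.
    assert (Hm : 1/2 < m) by lra.
    set (x := (s - 1 + m) * (1 - m) / (2 * m - 1)).
    assert (Hx : x * (2 * m - 1) = (s - 1 + m) * (1 - m)).
    { unfold x. field. lra. }
    assert (Hx0 : 0 < x).
    { unfold x. apply Rdiv_lt_0_compat; nra. }
    assert (Hx1 : x + s < 1) by nra.
    exists x. split; [nra|]. unfold g, h.
    rewrite (frac_id (x + s)) by lra.
    destruct (Rle_dec (x + s) (1 - m)) as [n|_]; [lra|].
    replace (/ Lam m * (x + s - (1 - m))) with x.
    + apply frac_id. nra.
    + unfold Lam.
      apply (Rmult_eq_reg_r m); [|lra].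
      field_simplify; try lra.
Qed.
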